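(* Let $0\le r,s\le n$ and $\mathbf c_1,\mathbf c_2,\mathbf c_1',\mathbf c_2'\in\mathrm{GF}(q^m)^n$ with $d_{\mathrm R}(\mathbf c_1,\mathbf c_2)>d_{\mathrm R}(\mathbf c_1',\mathbf c_2')$. Then $$|B_r(\mathbf c_1)\cap B_s(\mathbf c_2)|\le |B_r(\mathbf c_1')\cap B_s(\mathbf c_2')|.$$
   Context: The rank $\mathrm{rk}(\mathbf x)$ of $\mathbf x\in\mathrm{GF}(q^m)^n$ is the maximum number of its coordinates linearly independent over $\mathrm{GF}(q)$, and $d_{\mathrm R}(\mathbf x,\mathbf y)=\mathrm{rk}(\mathbf x-\mathbf y)$. $B_r(\mathbf x)=\{\mathbf y\in\mathrm{GF}(q^m)^n: d_{\mathrm R}(\mathbf x,\mathbf y)\le r\}$ is the ball of rank radius $r$ centered at $\mathbf x$. *)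

(* Defs.v *)
From HB Require Import structures.
From mathcomp Require Import all_boot all_order all_algebra all_field.
Set Implicit Arguments. Unset Strict Implicit. Unset Printing Implicit Defensive.
Import GRing.Theory.
Local Open Scope ring_scope.

(* Setting: F = GF(q) a finite field, L = GF(q^m) a finite-dimensional field
   extension of F (so L is finite of order q^m, m = \dim_F L).
   Vectors of GF(q^m)^n are row vectors 'rV[L]_n; to count elements we use
   the finite-type view finvect_type L of L. *)

Section RankMetric.
Variables (F : finFieldType) (L : fieldExtType F) (n : nat).

Notation FL := (finvect_type L).

Definition rk (x : 'rV[FL]_n) : nat :=
  \dim (<<[seq (x ord0 i : L) | i <- enum 'I_n]>>%VS : {vspace L}).

Definition dR (x y : 'rV[FL]_n) : nat := rk (x - y).

Definition ballR (r : nat) (x : 'rV[FL]_n) : {set 'rV[FL]_n} :=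
  [set y | dR x y <= r]%N.

End RankMetric.

(* Main.v *)
Require Import Defs.
From HB Require Import structures.
From mathcomp Require Import all_boot all_order all_algebra all_field.
Set Implicit Arguments. Unset Strict Implicit. Unset Printing Implicit Defensive.
Import GRing.Theory.
Local Open Scope ring_scope.

Section Mx.
Variables (F : finFieldType) (p q r s : nat).
Notation M := 'M[F]_(p, q).

Definition gM (X : M) := #|[set Y : M | (\rank Y <= r)%N && (\rank (X - Y)%R <= s)%N]|.

Definition ins (j : 'I_p) (A : M) (t : 'rV[F]_q) : M :=
  \matrix_(i, l) (if i == j then t 0 l else A i l).

Lemma row_ins_j j A t : row j (ins j A t) = t.
Proof. by apply/rowP => l; rewrite !mxE eqxx. Qed.

Lemma row_ins_i j A t i : i != j -> row i (ins j A t) = row i A.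
Proof. by move=> ij; apply/rowP => l; rewrite !mxE (negPf ij). Qed.

Lemma ins_ins j A u t : ins j (ins j A u) t = ins j A t.
Proof. by apply/matrixP => i l; rewrite !mxE; case: eqP. Qed.

Lemma ins_row j A : ins j A (row j A) = A.
Proof. by apply/matrixP => i l; rewrite !mxE; case: eqP => // ->. Qed.

Lemma ins_sub j A B a b : ins j A a - ins j B b = ins j (A - B) (a - b).
Proof. by apply/matrixP => i l; rewrite !mxE; case: eqP. Qed.

Lemma ins_eqmx j A t : (ins j A t :=: ins j A 0 + t)%MS.
Proof.
apply/eqmxP/andP; split.
  apply/row_subP => i; case: (eqVneq i j) => [->|ij].
    by rewrite row_ins_j addsmxSr.
  rewrite row_ins_i //; apply: submx_trans (addsmxSl _ _).
  by rewrite -(@row_ins_i j A 0 i ij) row_sub.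
rewrite addsmx_sub; apply/andP; split; last by rewrite -{1}(row_ins_j j A t) row_sub.
apply/row_subP => i; case: (eqVneq i j) => [->|ij].
  by rewrite row_ins_j sub0mx.
by rewrite row_ins_i // -(@row_ins_i j A t i ij) row_sub.
Qed.

Lemma rank_adds1 (B : M) (t : 'rV[F]_q) :
  [/\ (\rank B <= \rank (B + t))%N, (\rank (B + t) <= (\rank B).+1)%N &
      (\rank (B + t) = \rank B -> (t <= B)%MS)].
Proof.
split; first by rewrite mxrankS // addsmxSl.
  apply: leq_trans (mxrank_adds_leqif B t) _.
  by rewrite -(addn1 (\rank B)) leq_add2l rank_leq_row.
move=> eqr; have := mxrank_leqif_sup (addsmxSl B t).
rewrite eqr => -[_ /esym]; rewrite eqxx => /idP Bt.
exact: submx_trans (addsmxSr B t) Bt.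
Qed.

Lemma rank_sub_in (B : M) (t : 'rV[F]_q) : (t <= B)%MS -> \rank (B + t)%MS = \rank B.
Proof. by move/addsmx_idPl => ->. Qed.

Lemma keyK j A t t0 k :
  (\rank (ins j A t) <= k)%N -> (\rank (ins j A t0) <= k)%N ->
  (\rank (ins j A (t - t0)) <= k)%N.
Proof.
rewrite (ins_eqmx j A t) (ins_eqmx j A t0) (ins_eqmx j A (t - t0)); set B := ins j A 0.
have [h1 h2 h3] := rank_adds1 B t; have [h1' h2' h3'] := rank_adds1 B t0.
have [g1 g2 _] := rank_adds1 B (t - t0).
case: (ltnP (\rank B) k) => [lt|ge] Ht Ht0; first exact: leq_trans g2 lt.
have e1 : \rank (B + t)%MS = \rank B by apply/eqP; rewrite eqn_leq h1 andbT (leq_trans Ht).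
have e2 : \rank (B + t0)%MS = \rank B by apply/eqP; rewrite eqn_leq h1' andbT (leq_trans Ht0).
rewrite rank_sub_in; first by rewrite -e1.
by apply: addmx_sub; [exact: h3 | rewrite (eqmx_opp t0); exact: h3'].
Qed.


Definition PrM (X Y : M) := (\rank Y <= r)%N && (\rank (X - Y)%R <= s)%N.

Lemma fiber j (X : M) : (gM X <= gM (ins j X 0))%N.
Proof.
pose t0 (Y : M) := odflt 0 [pick t | PrM X (ins j (ins j Y 0) t)].
pose Phi (Y : M) := ins j Y (row j Y - t0 Y).
have Phi_inj : injective Phi.
  move=> Y1 Y2 eqP12.
  have e0 : ins j Y1 0 = ins j Y2 0.
    by rewrite -(ins_ins j Y1 (row j Y1 - t0 Y1)) -(ins_ins j Y2 (row j Y2 - t0 Y2)) -/(Phi _) eqP12.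
  have et : t0 Y1 = t0 Y2 by rewrite /t0 e0.
  have er : row j Y1 = row j Y2.
    have := congr1 (row j) eqP12; rewrite !row_ins_j et => /eqP.
    by rewrite (can_eq (addrK _)) => /eqP.
  by rewrite -(ins_row j Y1) -(ins_ins j Y1 0) e0 er ins_ins ins_row.
rewrite /gM -(card_imset _ Phi_inj); apply: subset_leq_card.
apply/subsetP => y /imsetP[Y]; rewrite inE => HY ->; rewrite inE.
set Z := ins j Y 0; set u := row j Y.
have YZ : Y = ins j Z u by rewrite /Z ins_ins ins_row.
have HZu : PrM X (ins j Z u) by rewrite -YZ.
rewrite /Phi /t0 -/Z -/u; case: pickP => [t Ht|]; last by move/(_ u); rewrite HZu.
move: HZu Ht; rewrite /PrM /= => /andP[Hr1 Hs1] /andP[Hr2 Hs2].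
have -> : ins j Y (u - t) = ins j Z (u - t) by rewrite /Z ins_ins.
rewrite keyK //=.
have -> : (ins j X 0 - ins j Z (u - t) = ins j (X - Z) ((row j X - u) - (row j X - t)))%R.
  by rewrite ins_sub; congr ins; rewrite sub0r !opprB [RHS]addrC addrA subrK.
apply: keyK.
  by rewrite -ins_sub ins_row.
by rewrite -ins_sub ins_row.
Qed.


Lemma rank_PQ (P : 'M[F]_p) (Q : 'M[F]_q) (Y : M) :
  P \in unitmx -> Q \in unitmx -> \rank (P *m Y *m Q) = \rank Y.
Proof.
move=> uP uQ; rewrite mxrankMfree ?row_free_unit //.
by rewrite (eqmxMfull _ (_ : row_full P)) // row_full_unit.
Qed.

Lemma gM_PQ (P : 'M[F]_p) (Q : 'M[F]_q) (X : M) :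
  P \in unitmx -> Q \in unitmx -> (gM X <= gM (P *m X *m Q))%N.
Proof.
move=> uP uQ; pose f (Y : M) := P *m Y *m Q.
have finj : injective f.
  move=> Y1 Y2 /(congr1 (fun Z => invmx P *m Z *m invmx Q)).
  by rewrite /f !mulmxA !mulmxK // !mulVmx // !mul1mx.
rewrite /gM -(card_imset _ finj); apply: subset_leq_card.
apply/subsetP => y /imsetP[Y]; rewrite !inE => /andP[h1 h2] ->.
by rewrite /f rank_PQ // h1 -mulmxBl -mulmxBr rank_PQ.
Qed.

Lemma gM_pid (X : M) : gM X = gM (pid_mx (\rank X)).
Proof.
apply/eqP; rewrite eqn_leq; apply/andP; split.
  have -> : (pid_mx (\rank X) : M) = invmx (col_ebase X) *m X *m invmx (row_ebase X).
    have uP := col_ebase_unit X; have uQ := row_ebase_unit X.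
    have eX := mulmx_ebase X.
    set P := col_ebase X in uP eX *; set Q := row_ebase X in uQ eX *; set d := \rank X in eX *.
    by rewrite -[in RHS]eX !mulmxA mulVmx // mul1mx mulmxK.
  by apply: gM_PQ; rewrite unitmx_inv ?col_ebase_unit ?row_ebase_unit.
have eX := mulmx_ebase X.
set P := col_ebase X in eX *; set Q := row_ebase X in eX *; set d := \rank X in eX *.
rewrite -[in leqRHS]eX; exact: (gM_PQ _ (col_ebase_unit X) (row_ebase_unit X)).
Qed.

Lemma gM_pid_mono d d' : (d' <= d)%N -> (gM (pid_mx d) <= gM (pid_mx d'))%N.
Proof.
elim: d => [|d IH]; first by rewrite leqn0 => /eqP->.
rewrite leq_eqVlt => /orP[/eqP->//|]; rewrite ltnS => /IH; apply: leq_trans.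
case: (ltnP d p) => [dp|pd].
  have -> : (pid_mx d : M) = ins (Ordinal dp) (pid_mx d.+1) 0.
    apply/matrixP => i l; rewrite !mxE; case: (eqVneq i (Ordinal dp)) => [->|ne] /=.
      by rewrite ltnn andbF.
    have ne' : (nat_of_ord i != d) by apply: contraNneq ne => e; apply/eqP; apply: val_inj; exact: e.
    by rewrite [in RHS]ltnS [in RHS]leq_eqVlt (negPf ne').
  exact: fiber.
have -> : (pid_mx d.+1 : M) = pid_mx d; last by [].
apply/matrixP => i l; rewrite !mxE.
have h1 : (i < d)%N := leq_trans (ltn_ord i) pd.
by rewrite h1 (leq_trans h1 (leqnSn d)).
Qed.

End Mx.

Theorem gM_mono (F : finFieldType) p q r s (X X' : 'M[F]_(p, q)) :
  (\rank X' < \rank X)%N -> (gM r s X <= gM r s X')%N.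
Proof.
move=> lt; rewrite gM_pid [X in (_ <= X)%N]gM_pid.
by apply: gM_pid_mono; apply: ltnW.
Qed.

Import VectorInternalTheory.

Section L.
Variables (F : finFieldType) (L : fieldExtType F) (n : nat).
Notation FL := (finvect_type L).

Definition Mof (x : 'rV[FL]_n) : 'M[F]_(n, dim L) := \matrix_i v2r (x 0 i : L).

Lemma rk_rank x : rk x = \rank (Mof x).
Proof.
rewrite /rk /dimv /span unlock_with /span_expanded_def mx2vsK.
set X := [seq x ord0 i | i <- enum 'I_n].
apply/eqmx_rank/andP; split; apply/row_subP => i.
  rewrite rowK (tnth_nth 0) /=.
  have /mapP[j _ ->] : X`_i \in X by apply: mem_nth; exact: ltn_ord.
  by rewrite -(rowK (fun j => v2r (x 0 j : L)) j) row_sub.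
rewrite rowK.
have xi : (x 0 i : L) \in X by apply/mapP; exists i; rewrite ?mem_enum.
have ix : (index (x ord0 i : L) X < size X)%N by rewrite index_mem.
pose k : 'I_(size X) := Ordinal ix.
have -> : v2r (x 0 i : L) = row k (b2mx (in_tuple X)).
  by rewrite rowK (tnth_nth 0) /= nth_index.
exact: row_sub.
Qed.

Definition Lof (Y : 'M[F]_(n, dim L)) : 'rV[FL]_n := \row_i (r2v (row i Y) : L).

Lemma MofK : cancel Mof Lof.
Proof. by move=> x; apply/rowP => i; rewrite !mxE rowK v2rK. Qed.

Lemma LofK : cancel Lof Mof.
Proof. by move=> Y; apply/row_matrixP => i; rewrite rowK mxE r2vK. Qed.

Lemma MofB x y : Mof (x - y) = Mof x - Mof y.
Proof. by apply/matrixP => i l; rewrite !mxE raddfB !mxE. Qed.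

Lemma MofN x : Mof (- x) = - Mof x.
Proof. by apply/matrixP => i l; rewrite !mxE raddfN !mxE. Qed.

Lemma card_balls r s (c1 c2 : 'rV[FL]_n) :
  #|ballR r c1 :&: ballR s c2| = gM r s (Mof (c2 - c1)).
Proof.
pose h y := Mof (y - c1).
have hinj : injective h.
  by move=> y1 y2 /(congr1 Lof); rewrite !MofK => /(congr1 (fun z => z + c1)); rewrite !subrK.
rewrite /gM -(card_imset _ hinj); congr #|pred_of_set _|.
apply/setP => Y; rewrite inE; apply/imsetP/idP.
  case=> y; rewrite !inE /dR !rk_rank => /andP[h1 h2] ->.
  rewrite /h -MofB -[y - c1]opprB MofN mxrank_opp h1 /=.
  by rewrite opprK addrA subrK.
move=> HY; exists (Lof Y + c1); last by rewrite /h addrK LofK.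
rewrite !inE /dR !rk_rank.
move: HY => /andP[h1 h2].
rewrite opprD addrCA subrr addr0 MofN mxrank_opp LofK h1 /=.
by rewrite addrA addrAC MofB LofK.
Qed.

End L.

Unset Implicit Arguments.
Local Close Scope ring_scope.

Theorem proposition2 (F : finFieldType) (L : fieldExtType F) (n r s : nat)
  (c1 c2 c1' c2' : 'rV[finvect_type L]_n) :
  (r <= n)%N -> (s <= n)%N ->
  (dR c1' c2' < dR c1 c2)%N ->
  (#|ballR r c1 :&: ballR s c2| <= #|ballR r c1' :&: ballR s c2'|)%N.
Proof.
move=> _ _; rewrite /dR !rk_rank !card_balls => lt.
apply: gM_mono.
by rewrite -(opprB c2) -(opprB c2') !MofN !mxrank_opp in lt.
Qed.
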